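(* Let $\mathcal{M}$ be any $R\times K$ matrix with entries in a finite set $V$, let $\hat v\subseteq V$, and let $1\le L\le U$ be integers such that every stretch of $\hat v$ in every row of $\mathcal{M}$ has length in $[L,U]$. Then for each $0\le k<K-U$, $$ls^+_k+\sum_{j=L}^{U}\#^{\hat v}_{k+j}-(U-L+1)R\le 0,$$ and for each $U\le k<K$, $$ls^-_k+\sum_{j=L}^{U}\#^{\hat v}_{k-j}-(U-L+1)R\le 0,$$ where $ls^+_k=\max(0,\#^{\hat v}_k-\#^{\hat v}_{k-1})$ and $ls^-_k=\max(0,\#^{\hat v}_k-\#^{\hat v}_{k+1})$.
   Context: Columns are indexed $0,\ldots,K-1$ and rows $0,\ldots,R-1$. For $\hat v\subseteq V$ and a column $k$, $\#^{\hat v}_k$ denotes the number of rows $r$ with $\mathcal{M}_{r,k}\in\hat v$, with the convention $\#^{\hat v}_{-1}=\#^{\hat v}_{K}=0$. A stretch of $\hat v$ in row $r$ is a maximal (with respect to inclusion) interval $[a,b]$ of column indices such that $\mathcal{M}_{r,j}\in\hat v$ for all $a\le j\le b$; its length is $b-a+1$. *)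

(* Defs.v *)
From HB Require Import structures.
From mathcomp Require Import all_boot all_order all_algebra.
Set Implicit Arguments. Unset Strict Implicit. Unset Printing Implicit Defensive.
Import Order.TTheory GRing.Theory Num.Theory.

Definition inv (V : finType) (R K : nat) (M : 'M[V]_(R, K)) (vh : {set V})
    (r : 'I_R) (j : nat) : bool :=
  if (insub j : option 'I_K) is Some j' then M r j' \in vh else false.

Definition inside (V : finType) (R K : nat) (M : 'M[V]_(R, K)) (vh : {set V})
    (r : 'I_R) (a b : nat) : Prop :=
  forall j, a <= j <= b -> inv M vh r j.

Definition is_stretch (V : finType) (R K : nat) (M : 'M[V]_(R, K))
    (vh : {set V}) (r : 'I_R) (a b : nat) : Prop :=
  a <= b /\ inside M vh r a b /\
  (forall a' b', a' <= a -> b <= b' -> inside M vh r a' b' -> a' = a /\ b' = b).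

(* #^{vh}_k, for an integer column index k; it is 0 outside 0..K-1
   (in particular #_{-1} = #_K = 0). *)
Definition cnt (V : finType) (R K : nat) (M : 'M[V]_(R, K)) (vh : {set V})
    (k : int) : int :=
  match k with
  | Posz n => (#|[set r : 'I_R | inv M vh r n]|)%:Z
  | Negz _ => 0
  end.

Definition lsp (V : finType) (R K : nat) (M : 'M[V]_(R, K)) (vh : {set V})
    (k : nat) : int :=
  (Num.max 0 (cnt M vh k%:Z - cnt M vh (k%:Z - 1)))%R.

Definition lsm (V : finType) (R K : nat) (M : 'M[V]_(R, K)) (vh : {set V})
    (k : nat) : int :=
  (Num.max 0 (cnt M vh k%:Z - cnt M vh (k%:Z + 1)))%R.

(* Main.v *)
Require Import Defs.
From HB Require Import structures.
From mathcomp Require Import all_boot all_order all_algebra.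
From mathcomp Require Import zify.
Import Order.TTheory GRing.Theory Num.Theory.

Section Helpers.
Variables (V : finType) (R K : nat) (M : 'M[V]_(R, K)) (vh : {set V}).

Lemma inv_out r j : (K <= j)%N -> Defs.inv M vh r j = false.
Proof. by move=> h; rewrite /Defs.inv insubN // -leqNgt. Qed.

Lemma card_sum n :
  #|[set r : 'I_R | Defs.inv M vh r n]| = (\sum_(r : 'I_R) (Defs.inv M vh r n : nat))%N.
Proof.
rewrite -sum1dep_card big_mkcond /=; apply: eq_bigr => r _.
by case: (Defs.inv M vh r n).
Qed.

Lemma first_false (g : nat -> bool) N :
  g 0 -> ~~ g N -> exists n, (forall i, (i <= n)%N -> g i) /\ ~~ g n.+1.
Proof.
move=> g0 gN.
have ex : exists m, ~~ g m by exists N.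
case: (ex_minnP ex) => m gm mmin.
have mpos : (0 < m)%N by case: m gm mmin => //; rewrite g0.
exists m.-1; split; last by rewrite prednK.
move=> i hi; apply/negPn/negP => gi.
have := mmin _ gi; lia.
Qed.


Variables (L U : nat).
Hypothesis HS : forall (r : 'I_R) (a b : nat), is_stretch M vh r a b ->
      (L <= b - a + 1 <= U)%N.

Lemma start_len r k : Defs.inv M vh r k ->
  (forall k', k = k'.+1 -> ~~ Defs.inv M vh r k') ->
  exists n, (L <= n.+1 <= U)%N /\ ~~ Defs.inv M vh r (k + n.+1).
Proof.
move=> hk hprev.
have h0 : (fun i => Defs.inv M vh r (k + i)) 0 by rewrite /= addn0.
have hK : ~~ (fun i => Defs.inv M vh r (k + i)) K by rewrite /= inv_out //; lia.
have [n [hin hout]] := @first_false (fun i => Defs.inv M vh r (k + i)) K h0 hK.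
exists n; split => //.
have st : is_stretch M vh r k (k + n).
  split; first lia.
  split.
    move=> j /andP[j1 j2]; have := hin (j - k) ltac:(lia).
    by have -> : (k + (j - k) = j)%N by lia.
  move=> a' b' ha hb hins.
  case: (ltnP a' k) => ha'.
    have hk' : k = k.-1.+1 by lia.
    by have := hprev k.-1 hk'; rewrite hins //; lia.
  case: (ltnP (k + n) b') => hb'.
    by move: hout; rewrite hins //; lia.
  split; lia.
by have := HS _ _ _ st; have -> : (k + n - k + 1 = n.+1)%N by lia.
Qed.

Lemma end_len r k : Defs.inv M vh r k -> ~~ Defs.inv M vh r k.+1 -> (U <= k)%N ->
  exists n, (L <= n.+1 <= U)%N /\ ~~ Defs.inv M vh r (k - n.+1).
Proof.
move=> hk hnext hUk.
have h0 : (fun i => (i <= k)%N && Defs.inv M vh r (k - i)) 0 by rewrite /= subn0 hk.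
have hK : ~~ (fun i => (i <= k)%N && Defs.inv M vh r (k - i)) k.+1 by rewrite /= ltnn.
have [n [hin hout]] := @first_false (fun i => (i <= k)%N && Defs.inv M vh r (k - i)) k.+1 h0 hK.
have nk : (n <= k)%N by have /andP[] := hin n (leqnn n).
have st : is_stretch M vh r (k - n) k.
  split; first lia.
  split.
    move=> j /andP[j1 j2]; have /andP[_] := hin (k - j) ltac:(lia).
    by have -> : (k - (k - j) = j)%N by lia.
  move=> a' b' ha hb hins.
  case: (ltnP a' (k - n)) => ha'.
    move: hout; rewrite hins ?andbT; lia.
  case: (ltnP k b') => hb'.
    by move: hnext; rewrite hins //; lia.
  split; lia.
have := HS _ _ _ st; have -> : (k - (k - n) + 1 = n.+1)%N by lia.
move=> hl; exists n; split => //.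
by move: hout; have -> : (n.+1 <= k)%N by lia.
Qed.
End Helpers.

Lemma sum_le1 (L U : nat) (h : nat -> nat) :
  (forall j, (h j <= 1)%N) -> (\sum_(L <= j < U.+1) h j <= U.+1 - L)%N.
Proof.
move=> h1; apply: leq_trans (_ : \sum_(L <= j < U.+1) 1 <= _)%N.
  by apply: leq_sum => j _.
by rewrite sum_nat_const_nat muln1.
Qed.

Lemma sum_le0 (L U j0 : nat) (h : nat -> nat) :
  (forall j, (h j <= 1)%N) -> (L <= j0 <= U)%N -> h j0 = 0%N ->
  (\sum_(L <= j < U.+1) h j <= U - L)%N.
Proof.
move=> h1 /andP[l1 l2] h0.
rewrite (@big_cat_nat _ _ _ j0) /=; [|lia|lia].
rewrite (@big_cat_nat _ _ _ j0.+1 j0 U.+1) /=; [|lia|lia].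
rewrite big_nat1 h0 add0n.
case: j0 l1 l2 h0 => [|j0] l1 l2 h0.
  have b := @sum_le1 1 U h h1; rewrite big_geq //; lia.
have a := @sum_le1 L j0 h h1.
have b := @sum_le1 j0.+2 U h h1.
lia.
Qed.

Lemma sumPosz (I : Type) (s : seq I) (P : pred I) (F : I -> nat) :
  (\sum_(i <- s | P i) (F i)%:Z = (\sum_(i <- s | P i) F i)%N%:Z)%R.
Proof. by rewrite (big_morph Posz PoszD (erefl (0%:Z)%R)). Qed.

Lemma arith (A P S T D : nat) : (A <= P + S)%N -> (S + T <= D)%N ->
 (Num.max 0 (A%:Z - P%:Z) + T%:Z - D%:Z <= 0)%R.
Proof. move=> *; lia. Qed.

Theorem mainTheorem14 (V : finType) (R K : nat) (M : 'M[V]_(R, K))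
    (vh : {set V}) (L U : nat) :
  (1 <= L)%N -> (L <= U)%N ->
  (forall (r : 'I_R) (a b : nat), is_stretch M vh r a b ->
      (L <= b - a + 1 <= U)%N) ->
  (forall k : nat, (k + U < K)%N ->
      (lsp M vh k + \sum_(L <= j < U.+1) cnt M vh (k + j)%N%:Z
         - ((U - L + 1) * R)%N%:Z <= 0)%R) /\
  (forall k : nat, (U <= k < K)%N ->
      (lsm M vh k + \sum_(L <= j < U.+1) cnt M vh (k - j)%N%:Z
         - ((U - L + 1) * R)%N%:Z <= 0)%R).
Proof.
move=> L1 LU HS; split => k hk.
- pose iv r j := Defs.inv M vh r j.
  pose prev r := if k is k'.+1 then iv r k' else false.
  have cP : (cnt M vh (k%:Z - 1) = (\sum_r (prev r : nat))%N%:Z)%R.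
    rewrite /prev; case: (k) => [|k'].
      by rewrite big1.
    have -> : (k'.+1%:Z - 1 = k'%:Z)%R by rewrite -addn1 PoszD addrK.
    by rewrite /= card_sum.
  pose st r := iv r k && ~~ prev r.
  have row r : (st r + \sum_(L <= j < U.+1) iv r (k + j) <= U - L + 1)%N.
    case hs: (st r).
      move/andP: hs => [h1 h2].
      have hp : forall k', k = k'.+1 -> ~~ iv r k'.
        by move=> k' ek; move: h2; rewrite /prev ek.
      have [n [hn hout]] := @start_len _ _ _ M vh L U HS r k h1 hp.
      have := @sum_le0 L U n.+1 (fun j => iv r (k + j)) (fun j => leq_b1 _) hn
        ltac:(by rewrite /= /iv (negbTE hout)).
      lia.
    have := @sum_le1 L U (fun j => iv r (k + j)) (fun j => leq_b1 _).
    lia.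
  have hA : (\sum_r (iv r k : nat) <= \sum_r (prev r : nat) + \sum_r (st r : nat))%N.
    rewrite -big_split /=; apply: leq_sum => r _; rewrite /st.
    by case: (iv r k); case: (prev r).
  have hT : (\sum_r (st r : nat) + \sum_(L <= j < U.+1) \sum_r (iv r (k + j) : nat)
             <= (U - L + 1) * R)%N.
    rewrite exchange_big /= -big_split /=.
    apply: leq_trans (_ : \sum_(r : 'I_R) (U - L + 1) <= _)%N.
      by apply: leq_sum => r _; exact: row.
    by rewrite sum_nat_const card_ord mulnC.
  rewrite /lsp cP /= card_sum.
  rewrite (eq_bigr (fun j => ((\sum_r (iv r (k + j) : nat))%N%:Z)%R)); last first.
    by move=> j _; rewrite /= card_sum.
  rewrite sumPosz.
  apply: arith; [exact: hA|exact: hT].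
- pose iv r j := Defs.inv M vh r j.
  pose st r := iv r k && ~~ iv r k.+1.
  have row r : (st r + \sum_(L <= j < U.+1) iv r (k - j) <= U - L + 1)%N.
    case hs: (st r).
      move/andP: hs => [h1 h2].
      have [n [hn hout]] := @end_len _ _ _ M vh L U HS r k h1 h2 ltac:(lia).
      have := @sum_le0 L U n.+1 (fun j => iv r (k - j)) (fun j => leq_b1 _) hn
        ltac:(by rewrite /= /iv (negbTE hout)).
      lia.
    have := @sum_le1 L U (fun j => iv r (k - j)) (fun j => leq_b1 _).
    lia.
  have hA : (\sum_r (iv r k : nat) <= \sum_r (iv r k.+1 : nat) + \sum_r (st r : nat))%N.
    rewrite -big_split /=; apply: leq_sum => r _; rewrite /st.
    by case: (iv r k); case: (iv r k.+1).
  have hT : (\sum_r (st r : nat) + \sum_(L <= j < U.+1) \sum_r (iv r (k - j) : nat)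
             <= (U - L + 1) * R)%N.
    rewrite exchange_big /= -big_split /=.
    apply: leq_trans (_ : \sum_(r : 'I_R) (U - L + 1) <= _)%N.
      by apply: leq_sum => r _; exact: row.
    by rewrite sum_nat_const card_ord mulnC.
  rewrite /lsm.
  have -> : (k%:Z + 1 = k.+1%:Z)%R by rewrite -addn1 PoszD.
  rewrite /= !card_sum.
  rewrite (eq_bigr (fun j => ((\sum_r (iv r (k - j) : nat))%N%:Z)%R)); last first.
    by move=> j _; rewrite /= card_sum.
  rewrite sumPosz.
  apply: arith; [exact: hA|exact: hT].
Qed.
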